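(* For every integer $k\ge1$, the $2\times2$ absorbing game \[ \begin{bmatrix}0;\,(\tfrac1k,k^* ) & 1^*\\ 1^* & k^*\end{bmatrix}, \] i.e. with $g_{11}=0$, $q_{11}=1/k$, $w_{11}=k$; $g_{12}=w_{12}=1$, $q_{12}=1$; $g_{21}=w_{21}=1$, $q_{21}=1$; $g_{22}=w_{22}=k$, $q_{22}=1$, has limit value $v=\lim_{\lambda\to0}v_\lambda=\sqrt k$. *)

(* Defs.v *)
From HB Require Import structures.
From mathcomp Require Import all_boot all_order all_algebra.
From mathcomp Require Import all_classical all_reals all_analysis.
Set Implicit Arguments. Unset Strict Implicit. Unset Printing Implicit Defensive.
Import Order.TTheory GRing.Theory Num.Theory.
Local Open Scope ring_scope.
Local Open Scope classical_set_scope.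

Section AbsorbingGames.
Variable R : realType.

Definition mixed (I : finType) : set (I -> R) :=
  [set x | (forall i, 0 <= x i) /\ \sum_(i : I) x i = 1].

Definition pay (I J : finType) (A : I -> J -> R) (x : I -> R) (y : J -> R) : R :=
  \sum_(i : I) \sum_(j : J) x i * y j * A i j.

(* value of the zero-sum matrix game A (row player maximizes), defined as
   the max-min over mixed strategies (equal to the min-max by von Neumann) *)
Definition mat_val (I J : finType) (A : I -> J -> R) : R :=
  sup [set inf [set pay A x y | y in @mixed J] | x in @mixed I].

(* Shapley operator of the lambda-discounted absorbing game with
   non-absorbing stage payoff g, absorption probability q, absorbing payoff w:
   v |-> val [ lambda g + (1 - lambda) (q w + (1 - q) v) ]. *)
Definition shapley_op (I J : finType) (g q w : I -> J -> R) (l v : R) : R :=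
  mat_val (fun i j => l * g i j + (1 - l) * (q i j * w i j + (1 - q i j) * v)).

(* v is the lambda-discounted value (Shapley's fixed point characterization) *)
Definition is_disc_value (I J : finType) (g q w : I -> J -> R) (l v : R) : Prop :=
  v = shapley_op g q w l v.

Definition ex_g (k : nat) (i j : 'I_2) : R :=
  if (i == 0%N :> nat) && (j == 0%N :> nat) then 0
  else if (i == 1%N :> nat) && (j == 1%N :> nat) then k%:R else 1.
Definition ex_q (k : nat) (i j : 'I_2) : R :=
  if (i == 0%N :> nat) && (j == 0%N :> nat) then k%:R^-1 else 1.
Definition ex_w (k : nat) (i j : 'I_2) : R :=
  if (i == 0%N :> nat) && (j == 0%N :> nat) then k%:R
  else if (i == 1%N :> nat) && (j == 1%N :> nat) then k%:R else 1.

End AbsorbingGames.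

(* Main.v *)
Require Import Defs.
From HB Require Import structures.
From mathcomp Require Import all_boot all_order all_algebra.
From mathcomp Require Import all_classical all_reals all_analysis.
From mathcomp Require Import ring lra.
Import Order.TTheory GRing.Theory Num.Theory.
Local Open Scope ring_scope.
Local Open Scope classical_set_scope.

Section S.
Variable R : realType.

Lemma pay2 (A : 'I_2 -> 'I_2 -> R) x y :
  pay A x y = x ord0 * y ord0 * A ord0 ord0 + x ord0 * y ord_max * A ord0 ord_max
   + x ord_max * y ord0 * A ord_max ord0 + x ord_max * y ord_max * A ord_max ord_max.
Proof. rewrite /pay !big_ord_recl !big_ord0 /=. have -> : lift ord0 ord0 = ord_max :> 'I_2 by apply: val_inj. by rewrite !addr0 addrA. Qed.

Lemma mixed2 (x : 'I_2 -> R) : mixed x ->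
  [/\ 0 <= x ord0, 0 <= x ord_max & x ord0 + x ord_max = 1].
Proof. case=> h; rewrite !big_ord_recl big_ord0 addr0 /=. have -> : lift ord0 ord0 = ord_max :> 'I_2 by apply: val_inj. by move=> <-; split. Qed.

Lemma pay_lb (A : 'I_2 -> 'I_2 -> R) x y : mixed x -> mixed y ->
  - (`|A ord0 ord0| + `|A ord0 ord_max| + `|A ord_max ord0| + `|A ord_max ord_max|) <= pay A x y.
Proof.
move=> /mixed2[x0 x1 sx] /mixed2[y0 y1 sy]; rewrite pay2.
have h : forall (p q a : R), 0 <= p -> p <= 1 -> 0 <= q -> q <= 1 -> - `|a| <= p * q * a.
  move=> p q a p0 p1 q0 q1; apply: lerNnormlW.
  rewrite !normrM (ger0_norm p0) (ger0_norm q0) -mulrA.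
  apply: le_trans (ler_piMl _ p1) _; [by rewrite mulr_ge0 | exact: ler_piMl].
have x0' : x ord0 <= 1 by lra. have x1' : x ord_max <= 1 by lra.
have y0' : y ord0 <= 1 by lra. have y1' : y ord_max <= 1 by lra.
have := h _ _ (A ord0 ord0) x0 x0' y0 y0'. have := h _ _ (A ord0 ord_max) x0 x0' y1 y1'.
have := h _ _ (A ord_max ord0) x1 x1' y0 y0'. have := h _ _ (A ord_max ord_max) x1 x1' y1 y1'.
lra.
Qed.

Lemma mat_val_saddle (A : 'I_2 -> 'I_2 -> R) xs ys V :
  mixed xs -> mixed ys ->
  (forall y, mixed y -> V <= pay A xs y) ->
  (forall x, mixed x -> pay A x ys <= V) -> mat_val A = V.
Proof.
move=> mx my hx hy; rewrite /mat_val.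
pose M := `|A ord0 ord0| + `|A ord0 ord_max| + `|A ord_max ord0| + `|A ord_max ord_max|.
have lbx : forall x, mixed x -> has_lbound [set pay A x y | y in @mixed _ 'I_2].
  by move=> x mxx; exists (- M) => _ [y yy <-]; exact: pay_lb.
have infle : forall x, mixed x -> inf [set pay A x y | y in @mixed _ 'I_2] <= V.
  move=> x mxx; apply: le_trans (hy x mxx).
  by apply: ge_inf; [exact: lbx | exists ys].
have infxs : inf [set pay A xs y | y in @mixed _ 'I_2] = V.
  apply/eqP; rewrite eq_le infle //=; apply: lb_le_inf; first by exists (pay A xs ys), ys.
  by move=> _ [y yy <-]; exact: hx.
apply/eqP; rewrite eq_le; apply/andP; split.
  by apply: ge_sup; [exists V, xs | move=> _ [x mxx <-]; exact: infle].
by apply: sup_upper_bound; [split; [exists V, xs | exists V => _ [x mxx <-]; exact: infle] | exists xs].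
Qed.

Definition vec2 (p : R) : 'I_2 -> R := fun i => if val i == 0%N then p else 1 - p.

Lemma mixed_vec2 p : 0 <= p <= 1 -> mixed (vec2 p).
Proof.
move=> /andP[p0 p1]; split.
  by move=> i; rewrite /vec2; case: ifP => _ //; rewrite subr_ge0.
by rewrite !big_ord_recl big_ord0 /vec2 /=; ring.
Qed.

Definition valf (k : nat) (a : R) : R :=
  if a <= 1 then 1 else 1 + (a - 1) * (k%:R - 1) / ((a - 1) + (k%:R - 1)).

Lemma mat_val_ex (k : nat) (hk : (0 < k)%N) (A : 'I_2 -> 'I_2 -> R) a :
  A ord0 ord0 = a -> A ord0 ord_max = 1 -> A ord_max ord0 = 1 -> A ord_max ord_max = k%:R ->
  mat_val A = valf k a.
Proof.
move=> h00 h01 h10 h11.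
have k1 : 1 <= k%:R :> R by rewrite ler1n.
rewrite /valf; case: ifP => ha.
  apply: (@mat_val_saddle A (vec2 0) (vec2 1)).
  - by apply: mixed_vec2; rewrite lexx ler01.
  - by apply: mixed_vec2; rewrite lexx ler01.
  - move=> y /mixed2[y0 y1 sy]; rewrite pay2 h00 h01 h10 h11 /vec2 /=.
    have : y ord_max <= y ord_max * k%:R by rewrite ler_peMr.
    lra.
  - move=> x /mixed2[x0 x1 sx]; rewrite pay2 h00 h01 h10 h11 /vec2 /=.
    have : x ord0 * a <= x ord0 by rewrite ler_piMr.
    lra.
have ha1 : 1 < a by rewrite ltNge ha.
set D := (a - 1) + (k%:R - 1).
have D0 : 0 < D by rewrite /D; lra.
set V := 1 + _ / D.
set p := (k%:R - 1) / D.
have p01 : 0 <= p <= 1.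
  apply/andP; split; first by rewrite divr_ge0 ?subr_ge0 // ltW.
  by rewrite ler_pdivrMr // mul1r /D; lra.
have e1 : p * a + (1 - p) * 1 = V.
  by rewrite /V /p; field; rewrite (gt_eqF D0).
have e2 : p * 1 + (1 - p) * k%:R = V.
  by rewrite /V /p /D; field; rewrite -/D (gt_eqF D0).
apply: (@mat_val_saddle A (vec2 p) (vec2 p)); try exact: mixed_vec2.
- move=> y /mixed2[y0 y1 sy]; rewrite pay2 h00 h01 h10 h11 /vec2 /=.
  have -> : p * y ord0 * a + p * y ord_max * 1 + (1 - p) * y ord0 * 1 +
    (1 - p) * y ord_max * k%:R = y ord0 * (p * a + (1 - p) * 1) + y ord_max * (p * 1 + (1 - p) * k%:R) by ring.
  by rewrite e1 e2 -mulrDl sy mul1r.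
- move=> x /mixed2[x0 x1 sx]; rewrite pay2 h00 h01 h10 h11 /vec2 /=.
  have -> : x ord0 * p * a + x ord0 * (1 - p) * 1 + x ord_max * p * 1 +
    x ord_max * (1 - p) * k%:R = x ord0 * (p * a + (1 - p) * 1) + x ord_max * (p * 1 + (1 - p) * k%:R) by ring.
  by rewrite e1 e2 -mulrDl sx mul1r.
Qed.

Lemma valf_ge1 k a : (0 < k)%N -> 1 <= valf k a.
Proof.
move=> hk; rewrite /valf; case: ifP => // /negbT; rewrite -ltNge => ha.
have k1 : 1 <= k%:R :> R by rewrite ler1n.
rewrite lerDl; apply: divr_ge0; [apply: mulr_ge0|]; lra.
Qed.

Lemma phi_le (s t : R) : 0 < s -> 0 <= t -> s * t / (s + t) <= s.
Proof.
move=> s0 t0; rewrite ler_pdivrMr; last lra.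
by rewrite mulrDr lerDr mulr_ge0 // ltW.
Qed.

Lemma valf_lip k a b : (0 < k)%N -> `|valf k a - valf k b| <= `|a - b|.
Proof.
move=> hk; have k1 : 1 <= k%:R :> R by rewrite ler1n.
set t := (k%:R - 1 : R); have t0 : 0 <= t by rewrite /t; lra.
have mixc : forall a b, a <= 1 -> 1 < b -> `|valf k a - valf k b| <= `|a - b|.
  move=> a' b' ha hb; rewrite /valf ha (negbTE (_ : ~~ (b' <= 1))) -?ltNge //.
  rewrite opprD addrA subrr sub0r normrN -/t.
  have h := @phi_le (b' - 1) t (ltac:(by rewrite subr_gt0)) t0.
  rewrite (@ger0_norm _ ((b' - 1) * t / (b' - 1 + t))); last by apply: divr_ge0; [apply: mulr_ge0 |]; lra.
  rewrite distrC ger0_norm; lra.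
case: (lerP a 1) => ha; case: (lerP b 1) => hb.
- by rewrite /valf ha hb subrr normr0.
- exact: mixc.
- by rewrite distrC [`|a - b|]distrC; exact: mixc.
rewrite /valf (negbTE (_ : ~~ (a <= 1))) -?ltNge // (negbTE (_ : ~~ (b <= 1))) -?ltNge // -/t.
set sa := a - 1; set sb := b - 1.
have sa0 : 0 < sa by rewrite /sa subr_gt0.
have sb0 : 0 < sb by rewrite /sb subr_gt0.
have da : sa + t != 0 by rewrite gt_eqF //; lra.
have db : sb + t != 0 by rewrite gt_eqF //; lra.
have -> : 1 + sa * t / (sa + t) - (1 + sb * t / (sb + t)) = (sa - sb) * (t ^+ 2 / ((sa + t) * (sb + t))).
  by field; rewrite da db.
have -> : a - b = sa - sb by rewrite /sa /sb; ring.
rewrite normrM ler_piMr // ger0_norm; last by apply: divr_ge0; [ apply: sqr_ge0 | apply: mulr_ge0; lra].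
rewrite ler_pdivrMr; last by apply: mulr_gt0; lra.
by rewrite mul1r expr2; apply: ler_pM => //; lra.
Qed.

Lemma shapley_ex k (hk : (0 < k)%N) l v :
  shapley_op (ex_g R k) (ex_q R k) (ex_w R k) l v = valf k ((1 - l) * (1 + (1 - k%:R^-1) * v)).
Proof.
have k0 : k%:R != 0 :> R by rewrite pnatr_eq0 -lt0n.
apply: mat_val_ex => //; rewrite /ex_g /ex_q /ex_w /=.
- by rewrite mulVf //; ring.
- ring.
- ring.
- ring.
Qed.

Definition Fk (k : nat) (l : R) (v : R) : R := valf k ((1 - l) * (1 + (1 - k%:R^-1) * v)).
End S.

HB.instance Definition _ (R : realType) k l :=
  @isFun.Build R R setT setT (@Fk R k l) (fun _ _ => Logic.I).

Section S2.
Variable R : realType.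

Lemma Fk_lip k l u v : (0 < k)%N -> 0 < l <= 1 ->
  `|Fk R k l u - Fk R k l v| <= (1 - l) * (1 - k%:R^-1) * `|u - v|.
Proof.
move=> hk /andP[l0 l1]; rewrite /Fk; apply: le_trans; first exact: valf_lip.
have c0 : 0 <= 1 - k%:R^-1 :> R by rewrite subr_ge0 invf_le1 ?ltr0n ?ler1n.
have -> : (1 - l) * (1 + (1 - k%:R^-1) * u) - (1 - l) * (1 + (1 - k%:R^-1) * v) = (1 - l) * ((1 - k%:R^-1) * (u - v)) by ring.
have l0' : 0 <= 1 - l by lra.
by rewrite !normrM (ger0_norm c0) (ger0_norm l0') mulrA.
Qed.

Lemma Fk_fix k l : (0 < k)%N -> 0 < l <= 1 -> exists v : R, v = Fk R k l v.
Proof.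
move=> hk hl; have /andP[l0 l1] := hl.
have c0 : 0 <= 1 - k%:R^-1 :> R by rewrite subr_ge0 invf_le1 ?ltr0n ?ler1n.
have c1 : 1 - k%:R^-1 < 1 :> R by rewrite ltrBlDl ltrDr invr_gt0 ltr0n.
have q0 : 0 <= (1 - l) * (1 - k%:R^-1) by rewrite mulr_ge0 //; lra.
have ctr : is_contraction (@Fk R k l : {fun [set: R] >-> [set: R]}).
  exists (NngNum q0); split; first rewrite /=.
    have : (1 - l) * (1 - k%:R^-1) <= 1 - k%:R^-1 by rewrite ler_piMl //; lra.
    lra.
  move=> [x y] _ /=; exact: Fk_lip.
have [p _ hp] := banach_fixed_point ctr closedT (ex_intro _ 0 Logic.I).
by exists p.
Qed.

Lemma sqrt_fix k : (0 < k)%N ->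
  valf R k (1 + (1 - k%:R^-1) * Num.sqrt (k%:R : R)) = Num.sqrt (k%:R : R).
Proof.
move=> hk; have k1 : 1 <= k%:R :> R by rewrite ler1n.
set r := Num.sqrt (k%:R : R).
have r0 : 0 < r by rewrite sqrtr_gt0; lra.
have kr : k%:R = r ^+ 2 by rewrite sqr_sqrtr //; lra.
have r1 : 1 <= r by rewrite -sqrtr1 ler_sqrt //; lra.
rewrite /valf kr.
case: (eqVneq r 1) => [->|rn1].
  by rewrite expr1n invr1 subrr mul0r addr0 lexx.
have r1' : 1 < r by rewrite lt_neqAle eq_sym rn1.
have rr : 1 < r ^+ 2 by rewrite expr_gt1 //; lra.
have c0 : 0 < 1 - (r ^+ 2)^-1 by rewrite subr_gt0 invf_lt1 //; lra.
rewrite (negbTE (_ : ~~ (1 + (1 - (r ^+ 2)^-1) * r <= 1))); last first.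
  by rewrite -ltNge ltrDl mulr_gt0.
have r0' : r != 0 by rewrite gt_eqF.
field.
rewrite r0' /= (_ : r + (r ^+ 2 - 1) + -1 * r + (r ^+ 2 - 1) * r = (r ^+ 2 - 1) * (1 + r)); last by ring.
by rewrite mulf_neq0 // gt_eqF //; lra.
Qed.

Lemma fix_bound k l v : (0 < k)%N -> 0 < l <= 1 -> v = Fk R k l v ->
  `|v - Num.sqrt (k%:R : R)| <= k%:R * l * (1 + (1 - k%:R^-1) * Num.sqrt (k%:R : R)).
Proof.
move=> hk hl hv; have /andP[l0 l1] := hl.
set r := Num.sqrt (k%:R : R).
have k1 : 1 <= k%:R :> R by rewrite ler1n.
have r0 : 0 <= r by rewrite sqrtr_ge0.
set c := 1 - k%:R^-1.
have c0 : 0 <= c by rewrite /c subr_ge0 invf_le1 ?ltr0n ?ler1n.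
have kc : k%:R * c = k%:R - 1 by rewrite /c mulrBr mulr1 mulfV // pnatr_eq0 -lt0n.
have A0 : 0 <= 1 + c * r by rewrite addr_ge0 // mulr_ge0.
have h1 := Fk_lip k l v r hk hl.
have h2 : `|Fk R k l r - r| <= l * (1 + c * r).
  have sf := sqrt_fix k hk; rewrite -/r -/c in sf; rewrite -{2}sf /Fk -/c.
  apply: le_trans; first exact: valf_lip.
  have -> : (1 - l) * (1 + c * r) - (1 + c * r) = - (l * (1 + c * r)) by ring.
  by rewrite normrN ger0_norm // mulr_ge0 // ltW.
have h3 : `|v - r| <= (1 - l) * c * `|v - r| + l * (1 + c * r).
  rewrite {1}hv.
  have -> : Fk R k l v - r = (Fk R k l v - Fk R k l r) + (Fk R k l r - r) by ring.
  by apply: le_trans (ler_normD _ _) _; apply: lerD.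
set D := `|v - r| in h3 *.
have D0 : 0 <= D by rewrite normr_ge0.
have h4 : (1 - c) * D <= l * (1 + c * r).
  have : 0 <= l * c * D by rewrite !mulr_ge0 // ltW.
  move: h3; set A := l * (1 + c * r); move=> h3 h5.
  have -> : (1 - c) * D = D - (1 - l) * c * D - l * c * D by ring.
  lra.
have -> : D = k%:R * ((1 - c) * D).
  by rewrite mulrA mulrBr mulr1 kc; ring.
rewrite -mulrA ler_wpM2l //; lra.
Qed.
End S2.

Theorem theorem3 (R : realType) (k : nat) (hk : (1 <= k)%N) :
  (forall l : R, 0 < l <= 1 ->
     exists! v : R, is_disc_value (ex_g R k) (ex_q R k) (ex_w R k) l v) /\
  (forall vl : R -> R,
     (forall l : R, 0 < l <= 1 ->
        is_disc_value (ex_g R k) (ex_q R k) (ex_w R k) l (vl l)) ->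
     vl x @[x --> 0^'+] --> Num.sqrt (k%:R : R)).
Proof.
have disc : forall l v, is_disc_value (ex_g R k) (ex_q R k) (ex_w R k) l v <-> v = Fk R k l v.
  by move=> l v; rewrite /is_disc_value shapley_ex.
split.
  move=> l hl; have [v hv] := @Fk_fix R k l hk hl.
  exists v; split; first by apply/disc.
  move=> u /disc hu; have /andP[l0 l1] := hl.
  have c0 : 0 <= 1 - k%:R^-1 :> R by rewrite subr_ge0 invf_le1 ?ltr0n ?ler1n.
  have c1 : 1 - k%:R^-1 < 1 :> R by rewrite ltrBlDl ltrDr invr_gt0 ltr0n.
  have q1 : (1 - l) * (1 - k%:R^-1) < 1.
    have : (1 - l) * (1 - k%:R^-1) <= 1 - k%:R^-1 by rewrite ler_piMl //; lra.
    lra.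
  have := Fk_lip R k l v u hk hl; rewrite -hv -hu => h.
  apply/eqP; rewrite -subr_eq0 -normr_eq0; apply/eqP.
  have D0 : 0 <= `|v - u| by rewrite normr_ge0.
  have : (1 - (1 - l) * (1 - k%:R^-1)) * `|v - u| <= 0 by rewrite mulrBl mul1r subr_le0.
  rewrite pmulr_rle0 ?subr_gt0 // => hD; apply/eqP; rewrite eq_le hD D0.
  done.
move=> vl hvl.
set r := Num.sqrt (k%:R : R).
set c := 1 - k%:R^-1 : R.
have k1 : 1 <= k%:R :> R by rewrite ler1n.
have r0 : 0 <= r by rewrite sqrtr_ge0.
have c0 : 0 <= c by rewrite /c subr_ge0 invf_le1 ?ltr0n ?ler1n.
set B := k%:R * (1 + c * r).
have B0 : 0 < B by rewrite mulr_gt0 //; [lra | rewrite ltr_pwDl // mulr_ge0].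
apply/cvgrPdist_le => e e0.
have d0 : 0 < Num.min 1 (e / B) by rewrite lt_min ltr01 divr_gt0.
near=> x.
have x0 : 0 < x by near: x; exact: nbhs_right_gt.
have xd : x <= Num.min 1 (e / B) by near: x; exact: nbhs_right_le.
move: xd; rewrite le_min => /andP[x1 xe].
have hx : 0 < x <= 1 by rewrite x0 x1.
have := @fix_bound R k x (vl x) hk hx; rewrite -disc; move=> /(_ (hvl x hx)).
rewrite -/r -/c distrC => h; apply: le_trans h _.
have -> : k%:R * x * (1 + c * r) = x * B by rewrite /B; ring.
by rewrite -ler_pdivlMr // mulrC.
Unshelve. all: end_near.
Qed.
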